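(* Let $n\ge1$ and let $H=[a_{ij}]\in M_n(\mathbb N)$ be a symmetric positive semidefinite matrix of nonnegative integers such that $\alpha_i:=a_{ii}\ge\max_{j\ne i}a_{ij}$ for every $1\le i\le n$. Let $$\mathcal{J}_H=\left\langle x_l^{\alpha_l},\ x_i^{\alpha_i-a_{ij}}x_j^{\alpha_j-a_{ij}} : 1\le l\le n,\ 1\le i<j\le n\right\rangle\subseteq R_n.$$ Then $\dim_{\mathbb K}\left(R_n/\mathcal{J}_H\right)\ge\det H$.
   Context: $\mathbb K$ is a field and $R_n=\mathbb K[x_1,\ldots,x_n]$; $\mathbb N$ denotes the nonnegative integers. $\dim_{\mathbb K}$ is the dimension as a $\mathbb K$-vector space (finite since all $x_l^{\alpha_l}$ lie in $\mathcal{J}_H$). *)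

(* Defs.v *)
From HB Require Import structures.
From mathcomp Require Import all_boot all_order all_algebra.
From mathcomp Require Import mpoly.
From mathcomp Require Import Rstruct.
From Stdlib Require Import Reals.
Set Implicit Arguments. Unset Strict Implicit. Unset Printing Implicit Defensive.
Import Order.TTheory GRing.Theory Num.Theory.
Local Open Scope ring_scope.

Definition Hint (n : nat) (H : 'M[nat]_n) : 'M[int]_n :=
  map_mx (fun a : nat => a%:Z) H.

Definition psd_real (n : nat) (H : 'M[nat]_n) : Prop :=
  forall v : 'cV[R]_n,
    0 <= (v^T *m map_mx (fun a : nat => a%:R : R) H *m v) 0 0.

Definition in_JH (K : fieldType) (n : nat) (H : 'M[nat]_n) (p : {mpoly K[n]})
  : Prop :=
  exists (q1 : 'I_n -> {mpoly K[n]}) (q2 : 'I_n -> 'I_n -> {mpoly K[n]}),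
    p = \sum_(l < n) q1 l * 'X_l ^+ (H l l)
      + \sum_(i < n) \sum_(j < n | ltn i j)
          q2 i j * ('X_i ^+ (H i i - H i j) * 'X_j ^+ (H j j - H i j)).

Definition lin_indep_mod_JH (K : fieldType) (n : nat) (H : 'M[nat]_n)
  (k : nat) (p : 'I_k -> {mpoly K[n]}) : Prop :=
  forall c : 'I_k -> K,
    in_JH H (\sum_(t < k) c t *: p t) -> forall t, c t = 0.

(* Main.v *)
Require Import Defs.
From HB Require Import structures.
From mathcomp Require Import all_boot all_order all_algebra.
From mathcomp Require Import mpoly.
From mathcomp Require Import zify ring lra.
From mathcomp Require Import Rstruct.
From Stdlib Require Import Classical.
Import Order.TTheory GRing.Theory Num.Theory.
Local Open Scope ring_scope.

Module LApart.
Set Implicit Arguments. Unset Strict Implicit. Unset Printing Implicit Defensive.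
Section LA.
Variable F : realFieldType.

Definition bf n (A : 'M[F]_n) (u v : 'cV[F]_n) : F := (u^T *m A *m v) 0 0.
Definition psd n (A : 'M[F]_n) := forall v : 'cV[F]_n, 0 <= bf A v v.

Lemma bfDl n (A : 'M[F]_n) u1 u2 v : bf A (u1 + u2) v = bf A u1 v + bf A u2 v.
Proof. by rewrite /bf linearD /= !mulmxDl mxE. Qed.
Lemma bfDr n (A : 'M[F]_n) u v1 v2 : bf A u (v1 + v2) = bf A u v1 + bf A u v2.
Proof. by rewrite /bf mulmxDr mxE. Qed.
Lemma bfZl n (A : 'M[F]_n) a u v : bf A (a *: u) v = a * bf A u v.
Proof. by rewrite /bf linearZ /= -!scalemxAl mxE. Qed.
Lemma bfZr n (A : 'M[F]_n) a u v : bf A u (a *: v) = a * bf A u v.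
Proof. by rewrite /bf -scalemxAr mxE. Qed.
Lemma bfC n (A : 'M[F]_n) u v : A^T = A -> bf A u v = bf A v u.
Proof.
move=> sA; have e : (u^T *m A *m v)^T = v^T *m A *m u.
  by rewrite !trmx_mul trmxK sA mulmxA.
rewrite /bf -e. rewrite [in RHS]mxE. by [].
Qed.
Lemma bf_mul n (A : 'M[F]_n) u v : bf A u v = (u^T *m (A *m v)) 0 0.
Proof. by rewrite /bf mulmxA. Qed.
Lemma tr_delta n (u : 'cV[F]_n) i : (u^T *m (delta_mx i 0 : 'cV[F]_n)) 0 0 = u i 0.
Proof. by rewrite -colE !mxE. Qed.
Lemma sq_sum n (u : 'cV[F]_n) : (u^T *m u) 0 0 = \sum_k u k 0 ^+ 2.
Proof. rewrite mxE; apply: eq_bigr => k _; by rewrite mxE expr2. Qed.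

Lemma psd_kernel n (A : 'M[F]_n) x : A^T = A -> psd A -> bf A x x = 0 -> A *m x = 0.
Proof.
move=> sA pA h0; set y := A *m x.
have hxy : bf A x y = (y^T *m y) 0 0.
  by rewrite bfC // bf_mul.
have hyx : bf A y x = (y^T *m y) 0 0 by rewrite bf_mul.
set s := (y^T *m y) 0 0 in hxy hyx.
set r := bf A y y.
have r0 : 0 <= r by apply: pA.
have s0 : 0 <= s by rewrite /s sq_sum; apply: sumr_ge0 => k _; apply: sqr_ge0.
have := pA (x + (- s / (r + 1)) *: y).
rewrite !bfDl !bfDr !bfZl !bfZr h0 hxy hyx -/r => H.
have hs : s = 0.
  have r1 : 0 < r + 1 by lra.
  have : 0 <= (- s / (r + 1)) * (s + s + (- s / (r+1)) * r) by lra.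
  rewrite mulNr !mulNr.
  set t := s / (r + 1).
  have ht : t * (r + 1) = s by rewrite /t divfK // gt_eqF.
  nra.
apply/matrixP => k l; rewrite (ord1 l) [in RHS]mxE.
have : \sum_k y k 0 ^+ 2 = 0 by rewrite -sq_sum.
move/eqP; rewrite psumr_eq0 => [/allP Hall|k' _]; last by apply: sqr_ge0.
have := Hall k (mem_index_enum k); by rewrite /= sqrf_eq0 => /eqP.
Qed.

Lemma bfE n (A : 'M[F]_n) u w : bf A u w = \sum_l \sum_k u k 0 * A k l * w l 0.
Proof.
rewrite /bf mxE; apply: eq_bigr => l _; rewrite mxE mulr_suml.
by apply: eq_bigr => k _; rewrite mxE.
Qed.

Lemma bfBl n (A B : 'M[F]_n) u w : bf (A - B) u w = bf A u w - bf B u w.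
Proof. by rewrite /bf mulmxBr mulmxBl !mxE. Qed.

Lemma bf_delta n (i : 'I_n) w : bf (delta_mx i i) w w = w i 0 ^+ 2.
Proof.
rewrite bfE (bigD1 i) //=.
have -> : \sum_(l < n | l != i) \sum_(k < n) w k 0 * delta_mx i i k l * w l 0 = 0.
  by apply: big1 => l /negPf nl; apply: big1 => k _; rewrite mxE nl andbF mulr0 mul0r.
rewrite (bigD1 i) //=.
have -> : \sum_(k < n | k != i) w k 0 * delta_mx i i k i * w i 0 = 0.
  by apply: big1 => k /negPf nk; rewrite mxE nk mulr0 mul0r.
by rewrite mxE !eqxx mulr1 !addr0 expr2.
Qed.

Lemma det_kernel n (A : 'M[F]_n) (x : 'cV[F]_n) : A *m x = 0 -> x != 0 -> \det A = 0.
Proof.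
move=> Ax xn0; have : \adj A *m (A *m x) = \det A *: x.
  by rewrite mulmxA mul_adj_mx mul_scalar_mx.
rewrite Ax mulmx0 => /esym /eqP; rewrite scaler_eq0 (negPf xn0) orbF.
by move/eqP.
Qed.

Definition adjv n (A : 'M[F]_n) i : 'cV[F]_n := \adj A *m delta_mx i 0.

Lemma adjvE n (A : 'M[F]_n) i : A *m adjv A i = \det A *: delta_mx i 0.
Proof. by rewrite /adjv mulmxA mul_mx_adj mul_scalar_mx. Qed.

Lemma adjv_i n (A : 'M[F]_n) i : adjv A i i 0 = cofactor A i i.
Proof. by rewrite /adjv -colE !mxE. Qed.

Lemma bf_adjv n (A : 'M[F]_n) w i : bf A w (adjv A i) = \det A * w i 0.
Proof. by rewrite bf_mul adjvE -scalemxAr mxE tr_delta. Qed.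

Lemma cofactor_ii n (A : 'M[F]_n.+1) i : cofactor A i i = \det (row' i (col' i A)).
Proof. by rewrite /cofactor addnn -signr_odd odd_double expr0 mul1r. Qed.

Definition ext n (i : 'I_n.+1) (v : 'cV[F]_n) : 'cV[F]_n.+1 :=
  \col_k (if unlift i k is Some k' then v k' 0 else 0).

Lemma bf_ext n (A : 'M[F]_n.+1) i v : bf A (ext i v) (ext i v) = bf (row' i (col' i A)) v v.
Proof.
rewrite !bfE (bigD1_ord i) //= [X in X + _]big1 => [|k _]; last by rewrite !mxE unlift_none mulr0.
rewrite add0r; apply: eq_bigr => l _.
rewrite (bigD1_ord i) //= !mxE unlift_none mul0r mul0r add0r.
by apply: eq_bigr => k _; rewrite !mxE !liftK.
Qed.

Lemma psd_sub n (A : 'M[F]_n.+1) i : psd A -> psd (row' i (col' i A)).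
Proof. by move=> pA v; rewrite -bf_ext. Qed.

Lemma sym_sub n (A : 'M[F]_n.+1) i : A^T = A -> (row' i (col' i A))^T = row' i (col' i A).
Proof. by move=> sA; apply/matrixP => k l; rewrite !mxE -[in RHS]sA mxE. Qed.

Lemma psd_det_ge0 n (A : 'M[F]_n) : A^T = A -> psd A -> 0 <= \det A.
Proof.
elim: n A => [|n IH] A sA pA; first by rewrite det_mx00.
have hD : 0 <= cofactor A 0 0 by rewrite cofactor_ii; apply: IH; [apply: sym_sub|apply: psd_sub].
have huu : bf A (adjv A 0) (adjv A 0) = \det A * cofactor A 0 0 by rewrite bf_adjv adjv_i.
have := pA (adjv A 0); rewrite huu.
case: (ltrgt0P (cofactor A 0 0)) hD => // [Dp _ |D0 _ _].
  by rewrite pmulr_lge0.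
have h0 : A *m adjv A 0 = 0 by apply: psd_kernel => //; rewrite huu D0 mulr0.
have := adjvE A 0; rewrite h0 => /matrixP /(_ 0 0); rewrite !mxE !eqxx mulr1.
by move <-.
Qed.

Lemma lemL n (A : 'M[F]_n) i w : A^T = A -> psd A -> 0 <= cofactor A i i ->
  bf A w w < w i 0 ^+ 2 -> \det A <= cofactor A i i.
Proof.
move=> sA pA hD hw.
set D := cofactor A i i in hD *; set u := adjv A i.
have huu : bf A u u = \det A * D by rewrite bf_adjv adjv_i.
have hwu : bf A w u = \det A * w i 0 by rewrite bf_adjv.
have huw : bf A u w = \det A * w i 0 by rewrite bfC.
have q0 := pA w.
case: (ltrgt0P D) hD => // [Dp _ | D0 _].
  have := pA (D *: w + (- w i 0) *: u).
  rewrite !bfDl !bfDr !bfZl !bfZr huu hwu huw => h.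
  set q := bf A w w in h hw q0. set d := \det A in h *. set a := w i 0 in h hw *.
  have h2 : 0 <= D * (D * q - a ^+ 2 * d) by rewrite -[X in _ <= X]opprK; lra.
  rewrite pmulr_rge0 // in h2.
  nra.
have h0 : A *m u = 0 by apply: psd_kernel => //; rewrite huu D0 mulr0.
have := adjvE A i; rewrite h0 => /matrixP /(_ i 0); rewrite !mxE !eqxx mulr1 => <-.
by rewrite D0.
Qed.
End LA.

End LApart.
Import LApart.

Module CBpart.
Set Implicit Arguments. Unset Strict Implicit. Unset Printing Implicit Defensive.
Local Close Scope ring_scope.
Section CB.
Variable N : nat.

Definition boxc n (H : 'M[nat]_n) (c : {ffun 'I_n -> 'I_N}) : bool :=
  [forall k, c k < H k k].
Definition pairc n (H : 'M[nat]_n) (c : {ffun 'I_n -> 'I_N}) : bool :=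
  [forall k, forall l, (k != l) ==> (H k l <= c k) || (H k l <= c l)].
Definition good n (H : 'M[nat]_n) c := boxc H c && pairc H c.

Definition Sset n (H : 'M[nat]_n) := [set c : {ffun 'I_n -> 'I_N} | good H c].
Definition count n (H : 'M[nat]_n) := #|Sset H|.

Definition dec n (i : 'I_n) (H : 'M[nat]_n) : 'M[nat]_n :=
  \matrix_(k, l) (H k l - ((k == i) && (l == i)))%N.

Lemma dec_off n (H : 'M[nat]_n) i k l : k != l -> dec i H k l = H k l.
Proof.
move=> kl; rewrite mxE; have : ~~ ((k == i) && (l == i)).
  by apply/andP => [[/eqP a /eqP b]]; move: kl; rewrite a b eqxx.
by move/negPf ->; rewrite subn0.
Qed.

Lemma dec_diag n (H : 'M[nat]_n) i k : dec i H k k = if k == i then (H k k).-1 else H k k.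
Proof. by rewrite mxE andbb; case: (k == i); rewrite ?subn1 ?subn0. Qed.

Lemma pairc_dec n (H : 'M[nat]_n) i c : pairc (dec i H) c = pairc H c.
Proof.
apply: eq_forallb => k; apply: eq_forallb => l.
by case: (boolP (k != l)) => // kl; rewrite dec_off.
Qed.

Lemma boxc_dec n (H : 'M[nat]_n) i c : 0 < H i i ->
  boxc (dec i H) c = boxc H c && (c i != (H i i).-1 :> nat).
Proof.
move=> Hp; apply/forallP/andP => [h|[/forallP h1 h2] k].
  have hi := h i; rewrite dec_diag eqxx in hi.
  split; last by lia.
  apply/forallP => k; have := h k; rewrite dec_diag; case: (k =P i) => [->|//]; lia.
rewrite dec_diag; case: (k =P i) => [->|]; last by move=> _; apply: h1.
have := h1 i; lia.
Qed.

Lemma good_dec n (H : 'M[nat]_n) i c : 0 < H i i ->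
  good (dec i H) c = good H c && (c i != (H i i).-1 :> nat).
Proof. by move=> Hp; rewrite /good boxc_dec // pairc_dec andbAC. Qed.


Section Slice.
Variables (n : nat) (H : 'M[nat]_n.+1) (i : 'I_n.+1).
Hypotheses (sH : (H^T)%R = H) (Hp : 0 < H i i) (HN : H i i <= N)
  (Hoff : forall j, j != i -> H i j < H i i).

Let vlt : (H i i).-1 < N. Proof. lia. Qed.
Let vo : 'I_N := Ordinal vlt.
Let sub := row' i (col' i H).
Let A := [set c : {ffun 'I_n.+1 -> 'I_N} | good H c && (c i == vo)].
Let f (c : {ffun 'I_n.+1 -> 'I_N}) : {ffun 'I_n -> 'I_N} := [ffun k => c (lift i k)].
Let g (d : {ffun 'I_n -> 'I_N}) : {ffun 'I_n.+1 -> 'I_N} :=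
  [ffun k => if unlift i k is Some k' then d k' else vo].

Lemma fgK d : f (g d) = d.
Proof. by apply/ffunP => k; rewrite !ffunE liftK. Qed.

Lemma gfK c : c \in A -> g (f c) = c.
Proof.
rewrite inE => /andP [_ /eqP ci]; apply/ffunP => k; rewrite !ffunE.
by case: unliftP => [j ->|->]; rewrite ?ffunE.
Qed.

Lemma Hsym k l : H k l = H l k.
Proof. by rewrite -[in RHS]sH mxE. Qed.

Lemma f_good c : c \in A -> f c \in Sset sub.
Proof.
rewrite !inE => /andP [/andP [/forallP hb /forallP hp] _]; apply/andP; split.
  by apply/forallP => k; rewrite ffunE !mxE; apply: hb.
apply/forallP => k; apply/forallP => l; apply/implyP => kl.
rewrite !ffunE !mxE.
have := hp (lift i k) => /forallP /(_ (lift i l)) /implyP; apply.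
by rewrite (inj_eq (@lift_inj _ i)).
Qed.

Lemma g_good d : d \in Sset sub -> g d \in A.
Proof.
rewrite !inE => /andP [/forallP hb /forallP hp].
have gi : g d i = vo by rewrite ffunE unlift_none.
rewrite gi eqxx andbT; apply/andP; split.
  apply/forallP => k; rewrite ffunE; case: unliftP => [j ->|->].
    by have := hb j; rewrite !mxE.
  by rewrite /= prednK.
apply/forallP => k; apply/forallP => l; apply/implyP => kl.
case: (unliftP i k) => [k' ek|ek].
  case: (unliftP i l) => [l' el|el].
    move: (hp k') => /forallP /(_ l') /implyP h; rewrite /sub !mxE in h.
    rewrite ek el !ffunE !liftK; apply: h.
    by apply: contra kl => /eqP e; rewrite ek el e.
  rewrite el gi /= (Hsym k i); apply/orP; right.
  have hk : k != i by rewrite ek eq_sym neq_lift.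
  have := Hoff hk; lia.
rewrite ek gi /=; apply/orP; left.
have : l != i by rewrite -ek eq_sym.
move/Hoff; lia.
Qed.

Lemma card_slice : #|A| = count sub.
Proof.
rewrite /count -(card_in_imset (f := f)); last first.
  by move=> c1 c2 h1 h2 e; rewrite -(gfK h1) -(gfK h2) e.
suff -> : f @: A = Sset sub by [].
apply/setP => d; apply/imsetP/idP => [[c hc ->]|hd].
  exact: f_good.
by exists (g d); [apply: g_good | rewrite fgK].
Qed.

Lemma count_split : count H = (count (dec i H) + count sub)%N.
Proof.
rewrite -card_slice /count -(cardsID (Sset (dec i H)) (Sset H)).
have -> : Sset H :&: Sset (dec i H) = Sset (dec i H).
  by apply/setP => c; rewrite !inE good_dec //; case: (good H c).
have -> : Sset H :\: Sset (dec i H) = A.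
  apply/setP => c; rewrite !inE good_dec //; case: (good H c) => //=.
  by rewrite negbK andbT.
by [].
Qed.

End Slice.

Lemma count0 (H : 'M[nat]_0) : count H = 1%N.
Proof.
rewrite /count; have -> : Sset H = setT.
  by apply/setP => c; rewrite !inE; apply/andP; split; apply/forallP => [[]].
by rewrite cardsT card_ffun !card_ord expn0.
Qed.

End CB.

End CBpart.
Import CBpart.

Module Mainpart.
Set Implicit Arguments. Unset Strict Implicit. Unset Printing Implicit Defensive.
Section Main.
Variable F : realFieldType.
Variable N : nat.

Definition natmx n (H : 'M[nat]_n) : 'M[F]_n := map_mx (fun a : nat => a%:R) H.

Lemma natmx_tr n (H : 'M[nat]_n) : H^T = H -> (natmx H)^T = natmx H.
Proof. by move=> sH; rewrite /natmx map_trmx sH. Qed.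

Lemma natmx_sub n (H : 'M[nat]_n.+1) i : natmx (row' i (col' i H)) = row' i (col' i (natmx H)).
Proof. by apply/matrixP => k l; rewrite !mxE. Qed.

Lemma natmx_dec n (H : 'M[nat]_n) i : (0 < H i i)%N -> natmx (dec i H) = natmx H - delta_mx i i.
Proof.
move=> Hp; apply/matrixP => k l; rewrite !mxE.
case: (k =P i) => [->|_]; case: (l =P i) => [->|_] //=; rewrite ?subn0 ?subr0 //.
by rewrite natrB.
Qed.

Lemma det_delta n (A : 'M[F]_n.+1) i : \det A = \det (A - delta_mx i i) + cofactor A i i.
Proof.
rewrite (expand_det_col A i) (expand_det_col (A - delta_mx i i) i).
have ec : forall k, cofactor (A - delta_mx i i) k i = cofactor A k i.
  move=> k; rewrite /cofactor; congr (_ * \det _); apply/matrixP => a b; rewrite !mxE.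
  by rewrite [lift i b == i]eq_sym (negPf (neq_lift i b)) andbF subr0.
rewrite (bigD1 i) //= [in RHS](bigD1 i) //= ec !mxE !eqxx /= addrAC; congr (_ + _).
  by rewrite mulrBl mul1r subrK.
by apply: eq_bigr => k /negPf nk; rewrite ec !mxE nk /= subr0.
Qed.

Lemma bf_ee n (A : 'M[F]_n) i j : bf A (delta_mx i 0) (delta_mx j 0) = A i j.
Proof. by rewrite bf_mul -colE trmx_delta -rowE !mxE. Qed.

Lemma bf_natdec n (H : 'M[nat]_n) i w : (0 < H i i)%N ->
  bf (natmx (dec i H)) w w = bf (natmx H) w w - w i 0 ^+ 2.
Proof. by move=> Hp; rewrite natmx_dec // bfBl bf_delta. Qed.


Lemma Hsym n (H : 'M[nat]_n) k l : H^T = H -> H k l = H l k.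
Proof. by move=> sH; rewrite -[in RHS]sH mxE. Qed.

Lemma tight n (H : 'M[nat]_n.+1) : H^T = H -> psd (natmx H) ->
  (forall i j, j != i -> H i j <= H i i)%N ->
  (forall i, ~~ ((0 < H i i) && [forall j, (j != i) ==> (H i j < H i i)]))%N ->
  \det (natmx H) = 0.
Proof.
move=> sH pH hoff ht.
have sA := natmx_tr sH.
case: (boolP [exists k, H k k == 0%N]) => [/existsP [k /eqP hk]|].
  apply: (@det_kernel _ _ _ (delta_mx k 0)).
    by apply: psd_kernel => //; rewrite bf_ee mxE hk.
  apply/negP => /eqP/matrixP/(_ k 0); rewrite !mxE !eqxx /= => /eqP; by rewrite oner_eq0.
move/existsPn => hpos.
have [i _ imax] := @arg_maxnP _ ord0 xpredT (fun k => H k k) isT.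
have := ht i; rewrite lt0n hpos /= => /forallPn [j]; rewrite negb_imply -leqNgt => /andP [ji hij].
have e1 : H i j = H i i by apply/eqP; rewrite eqn_leq hij hoff.
have hjj : (H j j <= H i i)%N := imax j isT.
have ij : i != j by rewrite eq_sym.
have e2 : H j j = H i i.
  by apply/eqP; rewrite eqn_leq hjj /= -e1 (Hsym i j sH); apply: hoff.
apply: (@det_kernel _ _ _ (delta_mx i 0 + (-1) *: delta_mx j 0)).
  apply: psd_kernel => //.
  rewrite bfDl !bfDr !bfZl !bfZr !bf_ee !mxE e1 (Hsym j i sH) e1 e2.
  ring.
apply/negP => /eqP/matrixP/(_ i 0); rewrite !mxE !eqxx (negPf ij) /= => /eqP.
by rewrite mulr0 addr0 oner_eq0.
Qed.

Lemma step n (H : 'M[nat]_n.+1) i : H^T = H -> psd (natmx H) -> (0 < H i i)%N -> (H i i <= N)%N ->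
  (forall j, j != i -> H i j < H i i)%N ->
  \det (natmx (row' i (col' i H))) <= (count N (row' i (col' i H)))%:R ->
  (psd (natmx (dec i H)) -> \det (natmx (dec i H)) <= (count N (dec i H))%:R) ->
  \det (natmx H) <= (count N H)%:R.
Proof.
move=> sH pH Hp HN Hoff IHsub IHdec.
rewrite (count_split sH Hp HN Hoff) natrD.
have hD : 0 <= cofactor (natmx H) i i.
  rewrite cofactor_ii; apply: psd_det_ge0; [apply: sym_sub; exact: natmx_tr | exact: psd_sub].
case: (classic (psd (natmx (dec i H)))) => [pd|npd].
  rewrite (det_delta _ i) -natmx_dec // cofactor_ii -natmx_sub.
  by apply: lerD; [apply: IHdec|apply: IHsub].
have [w hw] : exists w, bf (natmx (dec i H)) w w < 0.
  apply: NNPP => hn; apply: npd => w; rewrite leNgt; apply/negP => hw; apply: hn; by exists w.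
rewrite bf_natdec // subr_lt0 in hw.
have := lemL (natmx_tr sH) pH hD hw.
rewrite cofactor_ii -natmx_sub => h; apply: (le_trans h); apply: (le_trans IHsub).
by rewrite lerDr ler0n.
Qed.


Lemma diag_le_sum n (H : 'M[nat]_n) i : (H i i <= \sum_k H k k)%N.
Proof. by rewrite (bigD1 i) //= leq_addr. Qed.

Lemma sum_dec n (H : 'M[nat]_n) i : (0 < H i i)%N -> (\sum_k dec i H k k).+1 = \sum_k H k k.
Proof.
move=> Hp; rewrite (bigD1 i) //= [in RHS](bigD1 i) //= dec_diag eqxx -addSn prednK //.
congr (_ + _)%N; apply: eq_bigr => k /negPf nk; by rewrite dec_diag nk.
Qed.

Lemma sym_dec n (H : 'M[nat]_n) i : H^T = H -> (dec i H)^T = dec i H.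
Proof. by move=> sH; apply/matrixP => k l; rewrite !mxE (Hsym k l sH) andbC. Qed.

Lemma sym_subn n (H : 'M[nat]_n.+1) i : H^T = H -> (row' i (col' i H))^T = row' i (col' i H).
Proof. by move=> sH; apply/matrixP => k l; rewrite !mxE (Hsym _ _ sH). Qed.

Lemma main n : forall s (H : 'M[nat]_n), (\sum_k H k k <= s)%N -> H^T = H -> psd (natmx H) ->
  (forall i j, j != i -> H i j <= H i i)%N -> (forall i, H i i <= N)%N ->
  \det (natmx H) <= (count N H)%:R.
Proof.
elim: n => [|n IHn] s H.
  by move=> *; rewrite det_mx00 count0.
elim: s H => [|s IHs] H hs sH pH hoff hN;
  (case: (boolP [exists i, (0 < H i i)%N && [forall j, (j != i) ==> (H i j < H i i)%N]]) =>
    [/existsP [i /andP [Hp /forallP Hoff']]| /existsPn ht];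
    last by rewrite (tight sH pH hoff ht) ler0n).
  by have := diag_le_sum H i; lia.
have Hoff : forall j, j != i -> (H i j < H i i)%N by move=> j /(implyP (Hoff' j)).
apply: (step sH pH Hp (hN i) Hoff).
  apply: (IHn _ _ (leqnn _)).
  - exact: sym_subn.
  - rewrite natmx_sub; exact: psd_sub.
  - move=> k l lk; rewrite !mxE; apply: hoff; by rewrite (inj_eq (@lift_inj _ i)).
  - by move=> k; rewrite !mxE.
move=> pd; apply: IHs => //.
- by rewrite -ltnS (sum_dec Hp).
- exact: sym_dec.
- move=> k l lk; have kl : k != l by rewrite eq_sym.
  rewrite (dec_off _ _ kl) dec_diag; case: (k =P i) => [ek|_]; last exact: hoff.
  by rewrite ek in lk *; have := Hoff l lk; lia.
- by move=> k; rewrite dec_diag; case: (k == i); have := hN k; lia.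
Qed.

End Main.

End Mainpart.
Import Mainpart.

Lemma mcoeff_MX0 (K : fieldType) n (p : {mpoly K[n]}) g m : ~~ (g <= m)%MM -> (p * 'X_[g])@_m = 0.
Proof.
move=> ng; apply: memN_msupp_eq0; apply/negP => hm.
move: hm; rewrite (perm_mem (msuppMX p g)) => /mapP [m' _ e].
by move: ng; rewrite e lem_addr.
Qed.

Section Poly.
Variables (K : fieldType) (n N : nat) (H : 'M[nat]_n).
Hypothesis sH : H^T = H.
Hypothesis hoff : forall i j : 'I_n, j != i -> (H i j <= H i i)%N.

Definition mono (c : {ffun 'I_n -> 'I_N}) : 'X_{1..n} := [multinom ((H l l).-1 - c l)%N | l < n].

Lemma mono_inj c1 c2 : c1 \in Sset N H -> c2 \in Sset N H -> mono c1 = mono c2 -> c1 = c2.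
Proof.
rewrite !inE => /andP [/forallP h1 _] /andP [/forallP h2 _] /mnmP e.
apply/ffunP => l; apply: val_inj => /=.
have := e l; rewrite !mnmE; have := h1 l; have := h2 l; lia.
Qed.

Lemma mono_notin c (q : {mpoly K[n]}) l : c \in Sset N H ->
  (q * 'X_l ^+ (H l l))@_(mono c) = 0.
Proof.
rewrite inE => /andP [/forallP hb _].
rewrite mpolyXn mcoeff_MX0 //; apply/negP => /mnm_lepP /(_ l).
rewrite mulmnE mnm1E eqxx mnmE; have := hb l; lia.
Qed.

Lemma mono_notin2 c (q : {mpoly K[n]}) (i j : 'I_n) : c \in Sset N H -> (i < j)%N ->
  (q * ('X_i ^+ (H i i - H i j) * 'X_j ^+ (H j j - H i j)))@_(mono c) = 0.
Proof.
rewrite inE => /andP [/forallP hb /forallP hp] ij.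
have ne : i != j by apply: contraTneq ij => ->; rewrite ltnn.
have ne' : j != i by rewrite eq_sym.
rewrite !mpolyXn -mpolyXD mcoeff_MX0 //; apply/negP => /mnm_lepP h.
have hi := h i; have hj := h j.
rewrite mnmDE !mulmnE !mnm1E eqxx mnmE in hi.
rewrite mnmDE !mulmnE !mnm1E eqxx mnmE in hj.
move: hi hj; rewrite (negPf ne) (negPf ne') => hi hj.
have := hp i => /forallP /(_ j) /implyP /(_ ne).
have := hb i; have := hb j; have := hoff i j ne'; have := hoff j i ne; have := Hsym i j sH.
lia.
Qed.

End Poly.


Theorem theorem2 (K : fieldType) (n : nat) (H : 'M[nat]_n) :
  (1 <= n)%N ->
  H^T = H ->
  psd_real H ->
  (forall i j : 'I_n, j != i -> (H i j <= H i i)%N) ->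
  exists (k : nat) (p : 'I_k -> {mpoly K[n]}),
    lin_indep_mod_JH H p /\ \det (Hint H) <= k%:Z.
Proof.
move=> _ sH pH hoff.
pose N := (\sum_k H k k)%N.
have hN : forall i, (H i i <= N)%N by move=> i; apply: diag_le_sum.
pose S := Sset N H.
exists #|S|, (fun t => 'X_[@mono n N H (@enum_val _ (mem S) t)]).
split.
  move=> c [q1 [q2 e]] t.
  have := congr1 (mcoeff (@mono n N H (@enum_val _ (mem S) t))) e.
  rewrite raddf_sum /= (bigD1 t) //= big1 => [|s ns]; last first.
    rewrite mcoeffZ mcoeffX; case: eqP => [em|]; last by rewrite mulr0.
    have := @mono_inj n N H _ _ (enum_valP s) (enum_valP t) em => /enum_val_inj est.
    by move: ns; rewrite est eqxx.
  rewrite mcoeffZ mcoeffX eqxx mulr1 addr0 raddfD !raddf_sum /=.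
  rewrite big1 ?add0r => [|l _]; last exact: (@mono_notin K n N H _ _ _ (enum_valP t)).
  rewrite big1 // => i _; rewrite raddf_sum big1 // => j ij.
  exact: (@mono_notin2 K n N H sH hoff _ _ _ _ (enum_valP t) ij).
have hm := @main Rdefinitions.R N n N H (leqnn _) sH pH hoff hN.
have e : natmx Rdefinitions.R H = map_mx (fun z : int => z%:~R : Rdefinitions.R) (Hint H).
  by apply/matrixP => a b; rewrite !mxE.
rewrite e det_map_mx in hm.
by rewrite -(ler_int Rdefinitions.R) -[X in _ <= X]/((#|S|%:R : Rdefinitions.R)).
Qed.
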